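(* Let $n\ge 1$ and let $\xi=(\xi^1,\ldots,\xi^n)\in\mathbb{Z}^n\setminus\{0\}$. Let $k$ be the number of non-zero coordinates of $\xi$; write $\xi^{i_1},\ldots,\xi^{i_k}\neq 0$ with $i_1<\cdots<i_k$, and $\xi^{j_1}=\cdots=\xi^{j_{n-k}}=0$ with $j_1<\cdots<j_{n-k}$. Fix $\bar s\in\{1,\ldots,k\}$ and define vectors $\xi_1,\ldots,\xi_n\in\mathbb{Z}^n$ as follows: - $\xi_1=\xi$; - for $p=2,\ldots,k-\bar s+1$: $\xi_p^{i_{\bar s-1+p}}=-\xi^{i_{\bar s-1+p}}$ and $\xi_p^i=\xi^i$ for all other indices $i$; - for $p=k-\bar s+2,\ldots,k$: $\xi_p^{i_{\bar s-1+p-k}}=-\xi^{i_{\bar s-1+p-k}}$ and $\xi_p^i=\xi^i$ for all other indices $i$; - for $p=k+1,\ldots,n$: $\xi_p^{i_{\bar s}}=0$, $\xi_p^{j_{p-k}}=\xi^{i_{\bar s}}$, and $\xi_p^i=\xi^i$ for all other indices $i$. Then the vectors $\xi_1,\ldots,\xi_n$ are linearly independent.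
   Context: Here $\xi_p^i$ denotes the $i$-th coordinate of the vector $\xi_p$. *)

(* Defs.v *)
(* Vectors of Z^n are functions 'I_n -> int (coordinates 0..n-1);
   paper indices (1-based) are handled by the nat arithmetic below. *)
From mathcomp Require Import all_boot all_order all_algebra.
Set Implicit Arguments. Unset Strict Implicit. Unset Printing Implicit Defensive.
Import Order.TTheory GRing.Theory Num.Theory.
Local Open Scope ring_scope.

Definition nzidx n (xi : 'I_n -> int) : seq 'I_n := [seq i <- enum 'I_n | xi i != 0].
Definition zidx n (xi : 'I_n -> int) : seq 'I_n := [seq i <- enum 'I_n | xi i == 0].

Definition nzcount n (xi : 'I_n -> int) : nat := size (nzidx xi).

Definition iidx n (xi : 'I_n -> int) (a : nat) : nat := nth 0%N (map val (nzidx xi)) a.-1.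
Definition jidx n (xi : 'I_n -> int) (a : nat) : nat := nth 0%N (map val (zidx xi)) a.-1.
Definition ival n (xi : 'I_n -> int) (a : nat) : int := nth 0 (map xi (nzidx xi)) a.-1.

Definition xivec n (xi : 'I_n -> int) (sbar p : nat) : 'I_n -> int :=
  let k := nzcount xi in
  fun i =>
  if p == 1%N then xi i
  else if (p <= k - sbar + 1)%N then
    (if val i == iidx xi (sbar - 1 + p) then - xi i else xi i)
  else if (p <= k)%N then
    (if val i == iidx xi (sbar - 1 + p - k) then - xi i else xi i)
  else
    (if val i == iidx xi sbar then 0
     else if val i == jidx xi (p - k) then ival xi sbar
     else xi i).

Definition lin_indep m n (v : 'I_m -> 'I_n -> int) : Prop :=
  forall c : 'I_m -> int,
    (forall i : 'I_n, \sum_(p < m) c p * v p i = 0) -> forall p, c p = 0.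

(* Main.v *)
Require Import Defs.
From mathcomp Require Import all_boot all_order all_algebra.
From mathcomp Require Import zify.
Import GRing.Theory Num.Theory.
Local Open Scope ring_scope.

Lemma predlt (q s : nat) : (0 < q)%N -> (q <= s)%N -> (q.-1 < s)%N.
Proof. lia. Qed.

Section Aux.
Variables (n : nat) (xi : 'I_n -> int) (i0 : 'I_n).
Definition io q := nth i0 (nzidx xi) q.-1.
Definition jo m := nth i0 (zidx xi) m.-1.

Lemma uniqN : uniq (nzidx xi). Proof. by rewrite filter_uniq ?enum_uniq. Qed.
Lemma uniqZ : uniq (zidx xi). Proof. by rewrite filter_uniq ?enum_uniq. Qed.

Lemma sizeNZ : (nzcount xi + size (zidx xi))%N = n.
Proof.
rewrite /nzcount /nzidx /zidx !size_filter.
rewrite -[in RHS](size_enum_ord n) -(count_predC (fun i : 'I_n => xi i != 0)).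
congr (_ + _)%N; apply: eq_count => i /=; by rewrite negbK.
Qed.

Lemma val_io q : (0 < q)%N -> (q <= nzcount xi)%N -> iidx xi q = val (io q).
Proof. move=> q0 qk; rewrite /iidx /io (nth_map i0) //; rewrite /nzcount in qk; lia. Qed.

Lemma ival_io q : (0 < q)%N -> (q <= nzcount xi)%N -> ival xi q = xi (io q).
Proof. move=> q0 qk; rewrite /ival /io (nth_map i0) //; rewrite /nzcount in qk; lia. Qed.

Lemma xi_io q : (0 < q)%N -> (q <= nzcount xi)%N -> xi (io q) != 0.
Proof.
move=> q0 qk; have: io q \in nzidx xi.
  by rewrite /io; apply: mem_nth; rewrite /nzcount in qk; case: (q) q0 qk.
by rewrite mem_filter => /andP[].
Qed.

Lemma xi_jo m : (0 < m)%N -> (m <= size (zidx xi))%N -> xi (jo m) = 0.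
Proof.
move=> q0 qk; have: jo m \in zidx xi.
  by rewrite /jo; apply: mem_nth; case: (m) q0 qk.
by rewrite mem_filter => /andP[/eqP].
Qed.

Lemma val_jo m : (0 < m)%N -> (m <= size (zidx xi))%N -> jidx xi m = val (jo m).
Proof. move=> q0 qk; rewrite /jidx /jo (nth_map i0) //; lia. Qed.

Lemma eq_io q a : (0 < q)%N -> (q <= nzcount xi)%N -> (0 < a)%N -> (a <= nzcount xi)%N ->
  (val (io q) == iidx xi a) = (q == a).
Proof.
move=> q0 qk a0 ak; rewrite val_io // (inj_eq val_inj) /io nth_uniq ?uniqN //;
  try exact: predlt.
by apply/idP/idP => /eqP E; apply/eqP; lia.
Qed.

Lemma eq_jo q a : (0 < q)%N -> (q <= size (zidx xi))%N -> (0 < a)%N -> (a <= size (zidx xi))%N ->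
  (val (jo q) == jidx xi a) = (q == a).
Proof.
move=> q0 qk a0 ak; rewrite val_jo // (inj_eq val_inj) /jo nth_uniq ?uniqZ //; try exact: predlt.
by apply/idP/idP => /eqP E; apply/eqP; lia.
Qed.

Lemma neq_jo_io m a : (0 < m)%N -> (m <= size (zidx xi))%N -> (0 < a)%N -> (a <= nzcount xi)%N ->
  (val (jo m) == iidx xi a) = false.
Proof.
move=> m0 mk a0 ak; rewrite val_io //; apply/negbTE/eqP => /val_inj E.
by have := xi_io a a0 ak; rewrite -E xi_jo // eqxx.
Qed.
End Aux.
Arguments sizeNZ {n} xi.
Arguments io {n} xi i0 q.
Arguments jo {n} xi i0 m.
Arguments val_io {n xi i0 q}.
Arguments ival_io {n xi i0 q}.
Arguments xi_io {n xi i0 q}.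
Arguments xi_jo {n xi i0 m}.
Arguments val_jo {n xi i0 m}.
Arguments eq_io {n xi i0 q a}.
Arguments eq_jo {n xi i0 q a}.
Arguments neq_jo_io {n xi i0 m a}.

Theorem lemma3p1 (n : nat) (xi : 'I_n -> int) (sbar : nat) :
  (1 <= n)%N ->
  (exists i, xi i != 0) ->
  (1 <= sbar)%N -> (sbar <= nzcount xi)%N ->
  lin_indep (fun p : 'I_n => xivec xi sbar p.+1).
Proof.
move=> n1 [i0 _] s1 sk c H.
have hZ := sizeNZ xi.
have hs := xi_io (i0:=i0) s1 sk.
have c_hi : forall p : 'I_n, (nzcount xi <= p)%N -> c p = 0.
{ move=> p kp; have pn := ltn_ord p.
  have := H (jo xi i0 (p.+1 - nzcount xi)%N).
  rewrite (bigD1 p) //= big1 ?addr0.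
  - rewrite /xivec. case: ifP => h1; first lia. case: ifP => h2; first lia.
    case: ifP => h3; first lia.
    rewrite neq_jo_io; [|lia..]. rewrite eq_jo ?eqxx; [|lia..].
    move=> /eqP; rewrite mulf_eq0 => /orP[/eqP //|].
    by rewrite (ival_io (i0:=i0)) ?(negbTE hs) //.
  - move=> p' pp'. have pp : (p' : nat) <> p.
      by move=> /val_inj E; rewrite E eqxx in pp'.
    have pn' := ltn_ord p'.
    rewrite /xivec. case: ifP => _; first by rewrite xi_jo ?mulr0 //; lia.
    case: ifP => _; first by rewrite xi_jo ?oppr0 ?if_same ?mulr0 //; lia.
    case: ifP => h3; first by rewrite xi_jo ?oppr0 ?if_same ?mulr0 //; lia.
    rewrite neq_jo_io; [|lia..].
    rewrite eq_jo; [|lia..]. case: ifP => [/eqP E|_]; first lia.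
    by rewrite xi_jo ?mulr0 //; lia. }
have C0 : \sum_(p < n) c p = 0.
{ have := H (io xi i0 sbar).
  rewrite (eq_bigr (fun p => c p * xi (io xi i0 sbar))); last first.
  { move=> p _. have [kp|pk] := leqP (nzcount xi) p; first by rewrite c_hi // !mul0r.
    rewrite /xivec. case: ifP => // h1. case: ifP => h2.
    - rewrite eq_io; [|lia..]. case: ifP => // h3; move/eqP: h3; lia.
    - case: ifP => h3; [|lia]. rewrite eq_io; [|lia..].
      case: ifP => // h4; move/eqP: h4; lia. }
  rewrite -mulr_suml => /eqP; rewrite mulf_eq0 (negbTE hs) orbF => /eqP //. }
have c_mid : forall p : 'I_n, (0 < p)%N -> (p < nzcount xi)%N -> c p = 0.
{ move=> p p1 pk.
  pose q := if (p.+1 <= nzcount xi - sbar + 1)%N then (sbar - 1 + p.+1)%N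
            else (sbar - 1 + p.+1 - nzcount xi)%N.
  have q0 : (0 < q)%N by rewrite /q; case: ifP => h; lia.
  have qk : (q <= nzcount xi)%N by rewrite /q; case: ifP => h; lia.
  have hq := xi_io (i0:=i0) q0 qk.
  have := H (io xi i0 q).
  rewrite (bigD1 p) //=.
  have -> : xivec xi sbar p.+1 (io xi i0 q) = - xi (io xi i0 q).
  { rewrite /xivec. case: ifP => h1; first lia. case: ifP => h2.
    - rewrite eq_io; [|lia..].
      by have -> : q == (sbar - 1 + p.+1)%N by rewrite /q h2 eqxx.
    - case: ifP => h3; [|lia]. rewrite eq_io; [|lia..].
      by have -> : q == (sbar - 1 + p.+1 - nzcount xi)%N by rewrite /q h2 eqxx. }
  rewrite (eq_bigr (fun p' => c p' * xi (io xi i0 q))); last first.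
  { move=> p' pp'. have pp : (p' : nat) <> p.
      by move=> /val_inj E; rewrite E eqxx in pp'.
    have [kp|pk'] := leqP (nzcount xi) p'; first by rewrite c_hi // !mul0r.
    rewrite /xivec. case: ifP => // h1. case: ifP => h2.
    - rewrite eq_io; [|lia..]. case: ifP => // h3. exfalso.
      move: h3; rewrite /q; case: ifP => h4 /eqP; lia.
    - case: ifP => h3; [|lia]. rewrite eq_io; [|lia..].
      case: ifP => // h5. exfalso.
      move: h5; rewrite /q; case: ifP => h4 /eqP; lia. }
  move: C0; rewrite (bigD1 p) //= => C0.
  rewrite -mulr_suml.
  have -> : \sum_(i < n | i != p) c i = - c p.
    by apply/eqP; rewrite -addr_eq0 addrC C0.
  rewrite mulrN mulNr -opprD -mulrDl => /eqP; rewrite oppr_eq0.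
  rewrite mulf_eq0 (negbTE hq) orbF -mulr2n mulrn_eq0 orFb => /eqP //. }
move=> p.
have [kp|pk] := leqP (nzcount xi) p; first exact: c_hi.
case: (posnP p) => [p0|p0]; last exact: c_mid.
move: C0; rewrite (bigD1 p) //= big1 ?addr0 // => p' pp'.
have pp : (p' : nat) <> p by move=> /val_inj E; rewrite E eqxx in pp'.
have [kp'|pk'] := leqP (nzcount xi) p'; first exact: c_hi.
apply: c_mid => //; lia.
Qed.
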